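(* Let $n\ge 0$ and let $R$ be a local algebra of $\mathbb C$-dimension $n+2$. If $R$ is not isomorphic to $B_n=\mathbb C[S_1,\ldots,S_{n+1}]/(S_iS_j\mid i,j=1,\ldots,n+1)$, then $R$ is an $n$-factor.
   Context: A local algebra means a finite-dimensional commutative associative unital $\mathbb C$-algebra with a unique maximal ideal $\mathfrak m_R$ and $R/\mathfrak m_R\cong\mathbb C$. An $n$-factor is an algebra of the form $\mathbb C[S_1,\ldots,S_n]/I$ (for some ideal $I$) in which the images of $S_1,\ldots,S_n$ are linearly independent over $\mathbb C$; equivalently, an algebra generated by $n$ linearly independent elements. *)

(* Defs.v *)
From HB Require Import structures.
From mathcomp Require Import all_boot all_order all_algebra all_field.
Set Implicit Arguments. Unset Strict Implicit. Unset Printing Implicit Defensive.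
Import GRing.Theory Num.Theory.
Local Open Scope ring_scope.

Definition is_ideal (F : fieldType) (A : falgType F) (I : {vspace A}) : Prop :=
  forall a x : A, x \in I -> a * x \in I.

Definition is_proper_ideal (F : fieldType) (A : falgType F) (I : {vspace A}) : Prop :=
  is_ideal I /\ (1 \notin I).

Definition is_maximal_ideal (F : fieldType) (A : falgType F) (I : {vspace A}) : Prop :=
  is_proper_ideal I /\
  forall J : {vspace A}, is_proper_ideal J -> (I <= J)%VS -> J = I.

(* Local algebra: a unique maximal ideal m, and R/m ≅ F via the structure map,
   i.e. every x is congruent mod m to a scalar. *)
Definition is_local_algebra (F : fieldType) (A : falgType F) : Prop :=
  exists m : {vspace A},
    [/\ is_maximal_ideal m,
        (forall J : {vspace A}, is_maximal_ideal J -> J = m)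
      & (forall x : A, exists c : F, x - c%:A \in m)].

Definition is_n_factor (F : fieldType) (A : falgType F) (n : nat) : Prop :=
  exists X : n.-tuple A, free X /\ agenv <<X>>%VS = fullv.

(* A ≅ B_n = F[S_1..S_{n+1}]/(S_i S_j): an algebra isomorphism B_n -> A is,
   by the universal property of the presentation, given by images s_i with
   s_i s_j = 0, and it is bijective iff the image (1, s_1, ..., s_{n+1}) of the
   monomial basis of B_n is a basis of A. *)
Definition isom_to_Bn (F : fieldType) (A : falgType F) (n : nat) : Prop :=
  exists s : (n.+1).-tuple A,
    basis_of fullv (1 :: (s : seq A)) /\
    forall i j : 'I_n.+1, tnth s i * tnth s j = 0.

(* Main.v *)
Require Import Defs.
From HB Require Import structures.
From mathcomp Require Import all_boot all_order all_algebra all_field.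
From Stdlib Require Import Classical.
From mathcomp Require Import zify.
Import GRing.Theory Num.Theory.
Local Open Scope ring_scope.

Lemma exists_max (F : fieldType) (A : falgType F) k (I : {vspace A}) :
  (\dim {:A} - \dim I <= k)%N -> is_proper_ideal I ->
  exists J, is_maximal_ideal J /\ (I <= J)%VS.
Proof.
elim: k I => [|k IH] I hk hI;
  (have [hmax|hnot] := classic (is_maximal_ideal I);
    [by exists I; split; rewrite ?subvv|]);
  (have : exists J, is_proper_ideal J /\ (I <= J)%VS /\ J <> I
    by apply: NNPP => hne; apply: hnot; split=> // J hJ hIJ;
       apply: NNPP => hJI; apply: hne; exists J);
  case=> J [hJ [hIJ hJI]];
  (have hlt: (\dim I < \dim J)%N
    by rewrite ltn_neqAle dimvS // andbT; apply/negP => /eqP e; apply: hJI;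
       apply/eqP; rewrite eq_sym eqEdim hIJ e leqnn);
  have := dimvS (subvf J).
  lia.
move=> hJf.
have [J' [hJ' hJJ']] := IH J ltac:(lia) hJ.
by exists J'; split => //; apply: subv_trans hIJ hJJ'.
Qed.

Lemma unit_out (F : fieldType) (A : falgType F)
  (Acomm : forall x y : A, x * y = y * x) (m : {vspace A})
  (hm : is_maximal_ideal m)
  (hu : forall J, is_maximal_ideal J -> J = m) (u : A) :
  u \notin m -> exists v, u * v = 1.
Proof.
move=> hum; set I := (amull u @: fullv)%VS.
have hI : is_ideal I.
  move=> a y /memv_imgP [z _ ->]; rewrite lfunE /=.
  have -> : a * (u * z) = amull u (a * z) by rewrite lfunE /= !mulrA (Acomm a u).
  exact: memv_img (memvf _).
case: (boolP (1 \in I)) => h1.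
  by case/memv_imgP: h1 => v _ e; exists v; rewrite e lfunE.
exfalso.
have [J [hJ hIJ]] := @exists_max F A (\dim {:A}) I (leq_subr _ _) (conj hI h1).
rewrite (hu J hJ) in hIJ.
have : amull u 1 \in I by apply: memv_img (memvf _).
rewrite lfunE /= mulr1 => huI.
by move/negP: hum; apply; apply: (subvP hIJ).
Qed.

Lemma nilp (F : fieldType) (A : falgType F)
  (Acomm : forall x y : A, x * y = y * x) (m : {vspace A})
  (hm : is_maximal_ideal m)
  (hu : forall J, is_maximal_ideal J -> J = m) (x : A) :
  x \in m -> exists k, x ^+ k = 0.
Proof.
move=> hx.
pose V k := (amull (x ^+ k) @: fullv)%VS.
have hsub : forall k, (V k.+1 <= V k)%VS.
  move=> k; apply/subvP => y /memv_imgP [z _ ->]; rewrite lfunE /= exprSr -mulrA.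
  have -> : x ^+ k * (x * z) = amull (x ^+ k) (x * z) by rewrite lfunE.
  exact: memv_img (memvf _).
have [k hk] : exists k, \dim (V k.+1) = \dim (V k).
  apply: NNPP => hn.
  have : forall k, (\dim (V k) + k <= \dim (V 0))%N.
    elim=> [|k IHk]; first by rewrite addn0.
    have := dimvS (hsub k).
    have : \dim (V k.+1) <> \dim (V k) by move=> e; apply: hn; exists k.
    lia.
  by move/(_ (\dim (V 0)).+1); rewrite addnS ltnNge leq_addl.
have eV : V k.+1 = V k by apply/eqP; rewrite eqEdim hsub hk leqnn.
have : x ^+ k \in V k.+1.
  rewrite eV; have := memv_img (amull (x ^+ k)) (memvf 1).
  by rewrite lfunE /= mulr1.
case/memv_imgP => a _; rewrite lfunE /= => ea.
have hnm : 1 - x * a \notin m.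
  apply/negP => h; move: hm => [[hid h1] _]; move/negP: h1; apply.
  have hxa : x * a \in m by rewrite Acomm; apply: hid.
  by rewrite -(subrK (x * a) 1); apply: memvD.
have [v hv] := @unit_out _ _ Acomm m hm hu _ hnm.
exists k.
have h0 : x ^+ k * (1 - x * a) = 0 by rewrite mulrBr mulr1 mulrA -exprSr -ea subrr.
by rewrite -[x ^+ k]mulr1 -hv mulrA h0 mul0r.
Qed.

Theorem lemma3 (F : numClosedFieldType) (A : falgType F) (n : nat)
  (Acomm : forall x y : A, x * y = y * x)
  (Aloc : is_local_algebra A)
  (Adim : \dim (fullv : {vspace A}) = n.+2)
  (notBn : ~ isom_to_Bn A n) :
  is_n_factor A n.
Proof.
case: Aloc => m [hm huniq hdec].
have h1m : 1 \notin m by case: hm => [[]].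
have hid : is_ideal m by case: hm => [[]].
have hfull : (<[1]> + m)%VS = fullv.
  apply/eqP; rewrite eqEsubv subvf /=; apply/subvP => y _.
  have [c hc] := hdec y.
  rewrite -(subrK (c%:A) y) addrC; apply: memv_add => //.
  by apply/vlineP; exists c.
have hdm : \dim m = n.+1.
  have hcap : (<[1]> :&: m = 0)%VS.
    apply/eqP; rewrite -subv0; apply/subvP => y /memv_capP [/vlineP [c ->] hy].
    rewrite memv0; case: (eqVneq c 0) => [->|hc]; first by rewrite scale0r.
    exfalso; move/negP: h1m; apply.
    have -> : (1 : A) = c^-1 *: (c *: 1) by rewrite scalerA mulVf // scale1r.
    exact: memvZ.
  have := dimv_disjoint_sum hcap; rewrite hfull Adim dim_vline oner_neq0.
  by move=> [].
have [a [b [ha [hb hab]]]] : exists a b, a \in m /\ b \in m /\ a * b != 0.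
  apply: NNPP => hn; apply: notBn.
  have hs : size (vbasis m) == n.+1 by rewrite size_tuple hdm.
  exists (Tuple hs); split.
    rewrite basisEfree /= free_cons (span_basis (vbasisP m)) h1m.
    by rewrite (basis_free (vbasisP m)) subvf Adim /= (eqP hs).
  move=> i j; apply/eqP/negPn/negP => hne; apply: hn.
  exists (tnth (Tuple hs) i), (tnth (Tuple hs) j).
  by split; [|split] => //; apply: vbasis_mem; apply: (mem_tnth _ (Tuple hs)).
have [x [hx hx2]] : exists x, x \in m /\ x * x != 0.
  case: (eqVneq (a * a) 0) => ha2; last by exists a.
  case: (eqVneq (b * b) 0) => hb2; last by exists b.
  exists (a + b); split; first exact: memvD.
  rewrite mulrDl !mulrDr ha2 hb2 add0r addr0 (Acomm b a) -mulr2n.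
  by rewrite -scaler_nat scaler_eq0 negb_or pnatr_eq0 /= hab.
have [k hk] := @nilp _ _ Acomm m hm huniq x hx.
have hx0 : x != 0 by apply: contraNneq hx2 => ->; rewrite mul0r.
have hxn : x \notin <[x * x]>%VS.
  apply/negP => /vlineP [c hc].
  have hj : forall j, x = c ^+ j *: x ^+ j.+1.
    elim=> [|j IH]; first by rewrite expr0 scale1r expr1.
    rewrite {1}IH exprSr {2}hc -scalerAr scalerA -exprSr mulrA -!exprSr //.
  move/eqP: hx0; apply; rewrite (hj k) exprSr hk mul0r scaler0 //.
pose U0 := span [:: x; x * x].
have hfree0 : free [:: x; x * x].
  by rewrite free_cons span_seq1 hxn seq1_free.
have hxx : x * x \in m by apply: hid.
have hU0 : (U0 <= m)%VS.
  by apply/span_subvP => y; rewrite !inE => /orP [] /eqP ->.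
pose C := (m :\: U0)%VS.
have hdC : n = (\dim C).+1.
  have := dimv_cap_compl m U0; rewrite (capv_idPr hU0) (eqnP hfree0) hdm /=.
  by rewrite /C; move=> h; lia.
have hsz : size (x :: vbasis C) == n by rewrite /= size_tuple hdC.
exists (Tuple hsz); split.
  rewrite /= free_cons (span_basis (vbasisP C)) (basis_free (vbasisP C)) andbT.
  apply/negP => hxC.
  have : x \in (C :&: U0)%VS by rewrite memv_cap hxC memv_span // inE eqxx.
  by rewrite capv_diff memv0 (negPf hx0).
set S := agenv _.
have hxS : x \in S by apply: (subvP (sub_agenv _)); rewrite memv_span // inE eqxx.
have hxxS : x * x \in S by rewrite /S -agenvM; apply: memv_mul.
apply/eqP; rewrite eqEsubv subvf /= -hfull subv_add sub1_agenv /=.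
rewrite -(addv_diff_cap m U0) subv_add (capv_idPr hU0).
apply/andP; split.
  rewrite -[X in (X <= _)%VS](span_basis (vbasisP C)) /S.
  apply: subv_trans (sub_agenv _); apply/span_subvP => y hy.
  by apply: memv_span; rewrite /= inE hy orbT.
by apply/span_subvP => y; rewrite !inE => /orP [] /eqP ->.
Qed.
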